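(* Let $X$ be an amoebot structure with $n$ amoebots forming a line (a straight segment of consecutive grid nodes along one axis), and let $S\subseteq X$ be non-empty, each amoebot knowing whether it belongs to $S$. There is an algorithm in the reconfigurable circuit model (the line algorithm) that computes an $S$-shortest path forest within $O(\log n)$ rounds.
   Context: Geometric amoebot model with reconfigurable circuits: $G_\Delta$ is the infinite regular triangular grid graph; an amoebot structure is a finite set $X$ of grid nodes, each occupied by an anonymous constant-memory amoebot, with $G_X=(X,E_X)$ the induced (connected) subgraph. Each edge of $G_X$ is replaced by a constant number of external links with pins at both endpoints (labeling agreed by neighbors); each amoebot partitions its pins into partition sets; circuits are connected components of the graph on all partition sets joined by external links. In synchronous rounds every amoebot may update its state, change its partition and beep on partition sets; beeps are received at the start of the next round by all partition sets of the same circuit (without sender identity or count). Amoebots share compass orientation and chirality. An $S$-shortest path forest is a family of rooted trees $T_s=(V_s,E_s)$, $s\in S$, $V_s\subseteq X$, $E_s\subseteq E_X$, rooted at $s$, with pairwise disjoint $V_s$ covering $X$, such that for every $u\in V_s$ the tree path from $s$ to $u$ is a shortest path in $G_X$ and $s$ is a closest amoebot of $S$ to $u$; computing it means every amoebot not in $S$ knows its parent. *)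

(* Defs.v *)
From mathcomp Require Import all_boot all_algebra.
Set Implicit Arguments. Unset Strict Implicit. Unset Printing Implicit Defensive.
Import GRing.Theory Num.Theory.

(* Global compass directions (shared orientation and chirality):
   0 = E, 1 = NE, 2 = NW, 3 = W, 4 = SW, 5 = SE (counter-clockwise). *)
Definition node := (int * int)%type.

Definition dirvec (e : 'I_6) : node :=
  match val e with
  | 0 => (Posz 1, Posz 0) | 1 => (Posz 0, Posz 1) | 2 => ((-1)%R, Posz 1)
  | 3 => ((-1)%R, Posz 0) | 4 => (Posz 0, (-1)%R) | _ => (Posz 1, (-1)%R)
  end.

Definition addv (x y : node) : node := ((x.1 + y.1)%R, (x.2 + y.2)%R).

Definition opp (e : 'I_6) : 'I_6 := inord ((val e + 3) %% 6).

Definition pos (n : nat) (o : node) (d : 'I_6) (i : 'I_n) : node :=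
  ((o.1 + Posz (val i) * (dirvec d).1)%R, (o.2 + Posz (val i) * (dirvec d).2)%R).

Definition nbr (n : nat) (o : node) (d : 'I_6) (i : 'I_n) (e : 'I_6) : option 'I_n :=
  [pick j : 'I_n | pos o d j == addv (pos o d i) (dirvec e)].

Definition adjX (n : nat) (o : node) (d : 'I_6) : rel 'I_n :=
  fun i j => [exists e : 'I_6, pos o d j == addv (pos o d i) (dirvec e)].

(* Each edge carries k external links; pin (e, c) of an amoebot is the c-th pin
   on its side facing direction e.  The external link c between u and its
   neighbour v in direction e joins pin (e, c) of u with pin (opp e, c) of v. *)
Definition pin (k : nat) := ('I_6 * 'I_k)%type.

(* A uniform algorithm for anonymous constant-memory amoebots: finite state
   space Q, k pins per edge.  Partition sets are labelled by pins
   (part q p = label of the partition set containing pin p). *)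
Record algorithm (Q : finType) (k : nat) := Algorithm {
  init  : bool -> {ffun 'I_6 -> bool} -> Q;  (* in S? / occupied neighbour directions *)
  part  : Q -> pin k -> pin k;
  beep  : Q -> pin k -> bool;                (* beep on partition set with this label *)
  delta : Q -> {ffun pin k -> bool} -> Q;
  out   : Q -> option 'I_6                   (* direction of the parent (None = no parent) *)
}.

Section Semantics.
Variables (Q : finType) (k : nat) (A : algorithm Q k).
Variables (n : nat) (o : node) (d : 'I_6).

(* graph on (amoebot, partition-set label), joined by external links *)
Definition link (c : 'I_n -> Q) : rel ('I_n * pin k) :=
  fun x y => [exists p : pin k,
    [&& part A (c x.1) p == x.2, nbr o d x.1 p.1 == Some y.1
      & part A (c y.1) (opp p.1, p.2) == y.2]].

Definition recv (c : 'I_n -> Q) (u : 'I_n) : {ffun pin k -> bool} :=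
  [ffun l => [exists v : 'I_n, exists p : pin k,
     beep A (c v) (part A (c v) p) && connect (link c) (v, part A (c v) p) (u, l)]].

Definition occupied (i : 'I_n) : {ffun 'I_6 -> bool} :=
  [ffun e => nbr o d i e != None].

Fixpoint run (S : {set 'I_n}) (t : nat) : 'I_n -> Q :=
  match t with
  | 0 => fun i => init A (i \in S) (occupied i)
  | t'.+1 => let c := run S t' in fun i => delta A (c i) (recv c i)
  end.

Definition parent_at (S : {set 'I_n}) (t : nat) (i : 'I_n) : option 'I_n :=
  obind (nbr o d i) (out A (run S t i)).

End Semantics.

(* Rooted trees given by parent pointers: roots are exactly S, each parent is
   a G_X-neighbour, every u reaches its root s (the first element of S met when
   following parents) after m steps, and this tree path is no longer than any
   walk in G_X from u to any element of S (so it is a shortest path and s is a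
   closest element of S). *)
Definition is_SPF (n : nat) (adj : rel 'I_n) (S : {set 'I_n})
    (par : 'I_n -> option 'I_n) : Prop :=
  let step := fun x => odflt x (par x) in
  [/\ (forall u, par u = None <-> u \in S),
      (forall u v, par u = Some v -> adj u v) &
      (forall u, exists m (s : 'I_n),
         [/\ s \in S, iter m step u = s,
             (forall j, j < m -> iter j step u \notin S) &
             (forall (s' : 'I_n) (p : seq 'I_n),
                 s' \in S -> path adj u p -> last u p = s' -> m <= size p)])].

(* Main.v *)
From Pilot Require Import Defs.
From mathcomp Require Import all_boot all_algebra zify.
Import GRing.Theory Num.Theory.
Import Pilot.Defs.
Set Implicit Arguments. Unset Strict Implicit. Unset Printing Implicit Defensive.

Lemma pos_eq n o d (i j : 'I_n) e :
  (pos o d j == addv (pos o d i) (dirvec e)) =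
  ((e == d) && (val j == (val i).+1)) || ((e == opp d) && ((val j).+1 == val i)).
Proof.
case: o => o1 o2.
case: d => [[|[|[|[|[|[|dd]]]]]] Hd] //; case: e => [[|[|[|[|[|[|ee]]]]]] He] //;
rewrite /pos /addv /dirvec /opp /= -!val_eqE /= ?inordK //=;
apply/idP/idP; rewrite ?xpair_eqE; lia.
Qed.

Lemma oppK (e : 'I_6) : opp (opp e) = e.
Proof.
apply/val_inj; case: e => [[|[|[|[|[|[|ee]]]]]] He] //; rewrite /opp /= ?inordK //.
Qed.

Lemma opp_neq (e : 'I_6) : opp e != e.
Proof.
case: e => [[|[|[|[|[|[|ee]]]]]] He] //; rewrite /opp -val_eqE /= ?inordK //.
Qed.

Lemma nbr_some n o d (i j : 'I_n) e :
  (nbr o d i e == Some j) =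
  ((e == d) && (val j == (val i).+1)) || ((e == opp d) && ((val j).+1 == val i)).
Proof.
rewrite /nbr; case: pickP => [j' Hj'|H].
  rewrite pos_eq in Hj'.
  apply/idP/idP => [/eqP [<-] //|Hj].
  apply/eqP; congr Some; apply/val_inj.
  have Hdo : (d == opp d) = false by rewrite eq_sym; apply/negbTE/opp_neq.
  move: Hj Hj'; case: (e =P d) => [->|_] /=; rewrite ?Hdo /= ?orbF.
    by move=> /eqP -> /eqP ->.
  case: (e =P opp d) => //= _ /eqP <- /eqP; lia.
by rewrite -(pos_eq o d i j) H.
Qed.

Record LineAx n (nb : 'I_n -> 'I_6 -> option 'I_n) (F B : 'I_6) (tau : 'I_n -> nat) : Prop :=
  LineAxI {
  la_B : B = opp F;
  la_F : forall x y, nb x F = Some y <-> tau y = (tau x).+1;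
  la_BB : forall x y, nb x B = Some y <-> (tau y).+1 = tau x;
  la_no : forall x e, e != F -> e != B -> nb x e = None;
  la_inj : injective tau;
  la_lt : forall x, tau x < n;
  la_sur : forall m, m < n -> exists x, tau x = m }.

Definition tauL n (d : 'I_6) (x : 'I_n) : nat := if d < 3 then val x else n.-1 - x.
Definition F0 (d : 'I_6) : 'I_6 := inord (d %% 3).

Lemma nbr_someP n o d (i j : 'I_n) e :
  nbr o d i e = Some j <-> (e = d /\ val j = (val i).+1) \/ (e = opp d /\ (val j).+1 = val i).
Proof.
split => [H|H].
  have := nbr_some o d i j e; rewrite H eqxx => /esym.
  by case/orP => /andP[/eqP -> /eqP ->]; [left|right].
apply/eqP; rewrite nbr_some.
by case: H => [[-> ->]|[-> ->]]; rewrite !eqxx ?orbT.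
Qed.

Lemma nbr_noneP n o d (i : 'I_n) e : e != d -> e != opp d -> nbr o d i e = None.
Proof.
move=> H1 H2; case E: (nbr o d i e) => [j|] //.
by move/nbr_someP: E => [[/eqP]|[/eqP]]; rewrite ?(negbTE H1) ?(negbTE H2).
Qed.

Lemma F0_lt3 (d : 'I_6) : d < 3 -> F0 d = d.
Proof. by move=> H; apply/val_inj => /=; rewrite /F0 inordK ?modn_small //; lia. Qed.

Lemma F0_ge3 (d : 'I_6) : 3 <= d -> F0 d = opp d.
Proof.
case: d => [[|[|[|[|[|[|dd]]]]]] Hd] //= _; apply/val_inj; rewrite /F0 /opp /= !inordK //.
Qed.

Lemma lineL n o d : LineAx (nbr o d) (F0 d) (opp (F0 d)) (@tauL n d).
Proof.
have Hdo := opp_neq d.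
have Hdo' : d != opp d by rewrite eq_sym.
rewrite /tauL; case: ltnP => Hd.
- rewrite F0_lt3 //; split => //.
  + move=> x y; rewrite nbr_someP; split; first by case=> [[_ ->]|[/eqP]] //; rewrite (negbTE Hdo').
    by move=> H; left.
  + move=> x y; rewrite nbr_someP; split; first by case=> [[/eqP]|[_ ->]] //; rewrite (negbTE Hdo).
    by move=> H; right.
  + by move=> x e H1 H2; rewrite nbr_noneP.
  + exact: val_inj.
  + by move=> x; rewrite ltn_ord.
  + by move=> m Hm; exists (Ordinal Hm).
- rewrite F0_ge3 // oppK; split; first by rewrite oppK.
  + move=> x y; rewrite nbr_someP; split.
      case=> [[Hopp]|[_ /= Hv]]; [by rewrite Hopp eqxx in Hdo|by move: (ltn_ord x) (ltn_ord y); lia].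
    move=> H; right; split => //=; move: (ltn_ord x) (ltn_ord y); lia.
  + move=> x y; rewrite nbr_someP; split.
      case=> [[_ /= Hv]|[Hopp]]; [by move: (ltn_ord x) (ltn_ord y); lia|by rewrite -Hopp eqxx in Hdo].
    move=> H; left; split => //=; move: (ltn_ord x) (ltn_ord y); lia.
  + by move=> x e H1 H2; rewrite nbr_noneP.
  + move=> x y H; apply/val_inj => /=; move: H (ltn_ord x) (ltn_ord y); lia.
  + by move=> x; move: (ltn_ord x); lia.
  + move=> m Hm; have Hm' : n.-1 - m < n by lia.
    by exists (Ordinal Hm') => /=; lia.
Qed.

Lemma line_rev n nb F B (tau : 'I_n -> nat) :
  LineAx nb F B tau -> LineAx nb B F (fun x => n.-1 - tau x).
Proof.
case=> HB HF HBB Hn Hinj Hlt Hsur; split.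
- by rewrite HB oppK.
- move=> x y; rewrite HBB; have := Hlt x; have := Hlt y; lia.
- move=> x y; rewrite HF; have := Hlt x; have := Hlt y; lia.
- by move=> x e H1 H2; rewrite Hn.
- move=> x y H; apply: Hinj; move: H (Hlt x) (Hlt y); lia.
- by move=> x; have := Hlt x; lia.
- move=> m Hm; have [x Hx] := Hsur (n.-1 - m) ltac:(lia).
  by exists x; lia.
Qed.

Lemma SPF_of n (adj : rel 'I_n) (S : {set 'I_n}) (par : 'I_n -> option 'I_n) (D : 'I_n -> nat) :
  (forall u, u \in S -> par u = None) ->
  (forall u, u \in S -> D u = 0) ->
  (forall u, u \notin S -> exists y, [/\ par u = Some y, adj u y & (D y).+1 = D u]) ->
  (forall a b, adj a b -> D a <= (D b).+1) ->
  is_SPF adj S par.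
Proof.
move=> H1 H2 H3 H4; split.
- move=> u; split => [|/H1 //]; case: (boolP (u \in S)) => // Hu.
  by have [y [-> _ _]] := H3 u Hu.
- move=> u v; case: (boolP (u \in S)) => Hu; first by rewrite H1.
  by have [y [-> Ha _]] := H3 u Hu => -[<-].
set step := fun x => odflt x (par x).
have Hit : forall k u, D u = k ->
    iter k step u \in S /\ (forall j, j < k -> iter j step u \notin S).
  elim=> [|k IH] u Hu.
    split => //=; case: (boolP (u \in S)) => // Hn.
    by have [y [_ _ Hy]] := H3 u Hn; rewrite Hu in Hy.
  have Hn : u \notin S by apply/negP => /H2; rewrite Hu.
  have [y [Hp _ Hy]] := H3 u Hn.
  have Hs : step u = y by rewrite /step Hp.
  have [IH1 IH2] := IH y ltac:(by move: Hy; rewrite Hu => -[]).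
  split; first by rewrite iterSr Hs.
  by case=> [|j] Hj //; rewrite iterSr Hs; apply: IH2.
have Hpath : forall u p, path adj u p -> D u <= D (last u p) + size p.
  move=> u p; elim: p u => [|z p IH] u /=; first by rewrite addn0.
  move=> /andP [Ha Hp]; have := H4 _ _ Ha; have := IH z Hp; lia.
move=> u; exists (D u), (iter (D u) step u).
have [Hi1 Hi2] := Hit (D u) u erefl.
split => // s' p Hs' Hp Hl.
by have := Hpath u p Hp; rewrite Hl (H2 s' Hs').
Qed.

Definition dist (a b : nat) := (a - b) + (b - a).

Lemma bigmin_le_seq (I : eqType) (r : seq I) (P : pred I) (F : I -> nat) x s :
  s \in r -> P s -> \big[minn/x]_(i <- r | P i) F i <= F s.
Proof.
elim: r => //= i r IH; rewrite inE big_cons => /orP [/eqP <-|Hs] HP.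
  by rewrite HP geq_minl.
case: ifP => _; last exact: IH.
by apply: leq_trans (geq_minr _ _) (IH Hs HP).
Qed.

Definition Qt := ((bool * 'I_6) * ((bool * bool) * ((bool * bool) * bool)))%type.
Definition qS (q : Qt) := q.1.1.
Definition qF (q : Qt) := q.1.2.
Definition qaL (q : Qt) := q.2.1.1.
Definition qaR (q : Qt) := q.2.1.2.
Definition qsL (q : Qt) := q.2.2.1.1.
Definition qsR (q : Qt) := q.2.2.1.2.
Definition qle (q : Qt) := q.2.2.2.
Definition mkQ s F aL aR sL sR le : Qt := ((s, F), ((aL, aR), ((sL, sR), le))).

Definition ln (i : nat) : 'I_4 := inord i.
Definition flipl (l : 'I_4) : 'I_4 := inord (if odd l then l.-1 else l.+1).
Definition grp (l : 'I_4) : bool := 2 <= l.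

Definition partf (q : Qt) (p : pin 4) : pin 4 :=
  if qS q then p
  else if (p.1 == opp (qF q)) && (p.2 < 2) then (qF q, if qaL q then flipl p.2 else p.2)
  else if (p.1 == qF q) && (2 <= p.2) then (opp (qF q), if qaR q then flipl p.2 else p.2)
  else p.

Definition beepf (q : Qt) (l : pin 4) : bool :=
  qS q && ((l == (qF q, ln 0)) || (l == (opp (qF q), ln 2))).

Definition deltaf (q : Qt) (rec : {ffun pin 4 -> bool}) : Qt :=
  if qS q then q else
  let r0 := rec (qF q, ln 0) in let r1 := rec (qF q, ln 1) in
  let r2 := rec (opp (qF q), ln 2) in let r3 := rec (opp (qF q), ln 3) in
  mkQ false (qF q) (qaL q && ~~ r1) (qaR q && ~~ r3) (r0 || r1) (r2 || r3)
      (if r1 == r3 then qle q else r3).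

Definition initf (s : bool) (occ : {ffun 'I_6 -> bool}) : Qt :=
  mkQ s (if [pick e | occ e] is Some e then inord (e %% 3) else ord0) true true false false true.

Definition outf (q : Qt) : option 'I_6 :=
  if qS q then None
  else if qsL q && (~~ qsR q || qle q) then Some (opp (qF q))
  else if qsR q then Some (qF q) else None.

Definition Alg : algorithm Qt 4 := @Algorithm Qt 4 initf partf beepf deltaf outf.

Definition gpos n (tau : 'I_n -> nat) (m : nat) : option 'I_n := [pick x | tau x == m].
Definition hereS n (S : {set 'I_n}) (tau : 'I_n -> nat) m :=
  if gpos tau m is Some x then x \in S else false.
Fixpoint sp n (S : {set 'I_n}) tau m : nat :=
  if hereS S tau m then m.+1 else if m is m'.+1 then sp S tau m' else 0.
Fixpoint parf n (S : {set 'I_n}) tau (act : 'I_n -> bool) m : bool :=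
  if hereS S tau m then false
  else (if gpos tau m is Some x then act x else false)
       (+) (if m is m'.+1 then parf S tau act m' else false).

Lemma gposP n (tau : 'I_n -> nat) x : injective tau -> gpos tau (tau x) = Some x.
Proof.
move=> Hinj; rewrite /gpos; case: pickP => [y /eqP /Hinj -> //|/(_ x)].
by rewrite eqxx.
Qed.

Lemma sp_le n S (tau : 'I_n -> nat) m : sp S tau m <= m.+1.
Proof. elim: m => [|m IH] /=; case: ifP => //; lia. Qed.

Lemma grp_part q p : grp (partf q p).2 = grp p.2.
Proof.
rewrite /partf; case: ifP => // _.
case: p => e [[|[|[|[|l]]]] Hl] //=; rewrite ?andbF ?andbT;
  repeat case: ifP => //= _; rewrite /flipl /grp /= inordK //.
Qed.

Section Generic.
Variables (n : nat) (o : node) (d : 'I_6) (c : 'I_n -> Qt) (S : {set 'I_n}).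
Variables (F B : 'I_6) (tau : 'I_n -> nat) (l0 l1 : 'I_4) (g0 : bool) (act : 'I_n -> bool).
Hypothesis Hline : LineAx (nbr o d) F B tau.
Hypothesis Hg0 : grp l0 = g0.
Hypothesis Hg1 : grp l1 = g0.
Hypothesis H01 : l0 != l1.
Hypothesis Hgl : forall l, grp l = g0 -> l = l0 \/ l = l1.
Hypothesis HS : forall x, qS (c x) = (x \in S).
Hypothesis HpartF : forall x, x \notin S -> forall l, grp l = g0 -> partf (c x) (F, l) = (F, l).
Hypothesis HpartB : forall x, x \notin S -> forall b : bool,
  partf (c x) (B, if b then l1 else l0) = (F, if b (+) act x then l1 else l0).
Hypothesis Hbeep1 : forall x l, beepf (c x) l -> grp l.2 = g0 -> l = (F, l0).
Hypothesis Hbeep2 : forall x, x \in S -> beepf (c x) (F, l0).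

Let lane (b : bool) := if b then l1 else l0.
Let spm := sp S tau.
Let par := parf S tau act.

Definition phi (a : 'I_n * pin 4) : option (nat * bool) :=
  let: (x, (e, l)) := a in
  if grp l != g0 then None
  else if e == F then Some (spm (tau x), (l == l1) (+) par (tau x))
  else if e == B then (if tau x is m.+1 then Some (spm m, (l == l1) (+) par m) else None)
  else None.

Lemma lane_l1 b : (lane b == l1) = b.
Proof. by case: b; rewrite /lane ?eqxx // (negbTE H01). Qed.

Lemma grp_lane b : grp (lane b) = g0.
Proof. by case: b. Qed.

Lemma BneF : (B == F) = false.
Proof. case: Hline => -> *; apply/negbTE/opp_neq. Qed.

Lemma partS x p : x \in S -> partf (c x) p = p.
Proof. by move=> Hx; rewrite /partf HS Hx. Qed.

Lemma phiF x b : phi (x, partf (c x) (F, lane b)) = Some (spm (tau x), b (+) par (tau x)).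
Proof.
have -> : partf (c x) (F, lane b) = (F, lane b).
  by case: (boolP (x \in S)) => Hx; [rewrite partS|rewrite HpartF ?grp_lane].
by rewrite /phi /= grp_lane !eqxx /= lane_l1.
Qed.

Lemma hereS_tau x : hereS S tau (tau x) = (x \in S).
Proof. by case: Hline => *; rewrite /hereS gposP. Qed.

Lemma phiB x m b : tau x = m.+1 ->
  phi (x, partf (c x) (B, lane b)) = Some (spm m, b (+) par m).
Proof.
move=> Hm; case: (boolP (x \in S)) => Hx.
  by rewrite partS // /phi /= grp_lane !eqxx /= BneF Hm lane_l1.
rewrite /lane HpartB // -/(lane _) /phi /= grp_lane !eqxx /= lane_l1.
have Hh : hereS S tau m.+1 = false by rewrite -Hm hereS_tau (negbTE Hx).
have Hg : gpos tau m.+1 = Some x by rewrite -Hm gposP //; case: Hline.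
rewrite Hm /spm /par /= Hh Hg.
by case: (act x); case: b => //=; rewrite ?negbK.
Qed.

Lemma phi_none x p : grp p.2 != g0 -> phi (x, p) = None.
Proof. by case: p => e l /= ->. Qed.

Lemma lane_ex l : grp l = g0 -> exists b, l = lane b.
Proof. by case/Hgl => ->; [exists false|exists true]. Qed.

Lemma phi_link a b : link Alg o d c a b -> phi a = phi b.
Proof.
case: a b => x lx [y ly]; rewrite /link.
move/existsP => [[e l] /and3P [/eqP Ha /eqP Hn /eqP Hb]].
rewrite /= in Ha Hn Hb; subst lx ly.
case: (boolP (grp l == g0)) => Hl; last first.
  by rewrite !phi_none // grp_part.
have [b ->] := lane_ex (eqP Hl).
case: Hline => HB HF HBB Hno Hinj Hlt Hsur.
case: (boolP (e == F)) => [/eqP He|HeF].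
  subst e; move: Hn => /HF Hy.
  by rewrite phiF -HB (phiB _ Hy).
case: (boolP (e == B)) => [/eqP He|HeB]; last by rewrite Hno in Hn.
subst e; move: Hn => /HBB Hy.
have -> : opp B = F by rewrite HB oppK.
by rewrite phiF (phiB _ (esym Hy)).
Qed.

Lemma phi_conn a b : connect (link Alg o d c) a b -> phi a = phi b.
Proof.
move/connectP => [p Hp ->]; elim: p a Hp => //= z p IH a /andP [Hl Hp].
by rewrite (phi_link Hl) IH.
Qed.

Lemma reach m x : tau x = m -> 0 < spm m ->
  exists v, beepf (c v) (partf (c v) (F, l0)) /\
    connect (link Alg o d c) (v, partf (c v) (F, l0)) (x, partf (c x) (F, lane (par m))).
Proof.
case: Hline => HB HF HBB Hno Hinj Hlt Hsur.
elim: m x => [|m IH] x Hx /=; rewrite /spm /par /=.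
  case: ifP => [Hh|] //= _; exists x; rewrite -Hx hereS_tau in Hh.
  by rewrite partS // Hbeep2.
case: ifP => [Hh|Hh] Hsp.
  rewrite -Hx hereS_tau in Hh.
  by exists x; rewrite partS // Hbeep2.
have [y Hy] := Hsur m ltac:(have := Hlt x; lia).
have [v [Hv Hc]] := IH y Hy Hsp.
exists v; split => //; apply: (connect_trans Hc); apply: connect1.
have Hx' : x \notin S by rewrite -Hx hereS_tau in Hh; rewrite Hh.
apply/existsP; exists (F, lane (par m)); apply/and3P; split => //=.
  by apply/eqP/HF; rewrite Hx Hy.
rewrite -HB /lane HpartB //.
rewrite -Hx gposP // -/par HpartF //; last by case: ifP.
by rewrite addbC.
Qed.

Lemma recv_line u b : u \notin S ->
  recv Alg o d c u (F, lane b) = (0 < spm (tau u)) && (b == par (tau u)).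
Proof.
move=> Hu; rewrite /recv ffunE /=.
apply/idP/idP.
  move=> /existsP [v /existsP [p /andP [Hb Hc]]].
  have := phi_conn Hc.
  rewrite -(HpartF Hu (grp_lane b)) phiF.
  case: (boolP (grp (partf (c v) p).2 == g0)) => Hg; last by rewrite phi_none.
  rewrite (Hbeep1 Hb (eqP Hg)).
  have HvS : v \in S by move: Hb; rewrite /beepf HS => /andP [].
  have -> : (F, l0) = partf (c v) (F, lane false) by rewrite partS.
  have Hh := hereS_tau v; rewrite HvS in Hh.
  have E1 : spm (tau v) = (tau v).+1 by rewrite /spm; case: (tau v) Hh => [|m] /= ->.
  have E2 : par (tau v) = false by rewrite /par; case: (tau v) Hh => [|m] /= ->.
  rewrite phiF E1 E2 => -[<- Hp] /=; move: Hp.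
  by case: (b); case: (par (tau u)).
move=> /andP [Hsp /eqP ->].
have [v [Hv Hc]] := reach (erefl (tau u)) Hsp.
apply/existsP; exists v; apply/existsP; exists (F, l0); rewrite Hv /=.
by rewrite (HpartF Hu) ?grp_lane in Hc.
Qed.

End Generic.

Lemma divS K D : 0 < K -> D.+1 %/ K = D %/ K + (K %| D.+1).
Proof.
move=> HK; rewrite /dvdn; have := divn_eq D K; have := ltn_pmod D HK.
have := divn_eq D.+1 K; have := ltn_pmod D.+1 HK.
set q := D %/ K; set r := D %% K; set q' := D.+1 %/ K; set r' := D.+1 %% K.
case: eqP => Hr'; nia.
Qed.

Lemma odd_divS K D : 0 < K -> odd (D.+1 %/ K) = (K %| D.+1) (+) odd (D %/ K).
Proof. by move=> HK; rewrite divS // oddD addbC; case: (K %| D.+1). Qed.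

Lemma act_upd j D : (2 ^ j %| D) && ~~ odd (D %/ 2 ^ j) = (2 ^ j.+1 %| D).
Proof.
case: (boolP (2 ^ j %| D)) => /= H.
  move/dvdnP: H => [q ->]; rewrite mulnK ?expn_gt0 // expnS dvdn_pmul2r ?expn_gt0 //.
  by rewrite dvdn2.
apply/esym/negbTE; apply: contra H; apply: dvdn_trans; by rewrite expnS dvdn_mull.
Qed.

Lemma mod_upd j D : D %% 2 ^ j.+1 = odd (D %/ 2 ^ j) * 2 ^ j + D %% 2 ^ j.
Proof.
have HK : 0 < 2 ^ j by rewrite expn_gt0.
rewrite {1}(divn_eq D (2 ^ j)) {1}(divn_eq (D %/ 2 ^ j) 2) expnS.
rewrite mulnDl -mulnA -addnA [2 * _]mulnC modnMDl modn_small.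
  by rewrite modn2.
have := ltn_pmod D HK; rewrite modn2; case: (odd _); lia.
Qed.

Lemma hereS_tau' n nb F B (tau : 'I_n -> nat) (S : {set 'I_n}) x :
  LineAx nb F B tau -> hereS S tau (tau x) = (x \in S).
Proof. by case=> *; rewrite /hereS gposP. Qed.

Lemma hereS_ex n (S : {set 'I_n}) tau m : hereS S tau m -> exists2 s, s \in S & tau s = m.
Proof. rewrite /hereS /gpos; case: pickP => // s /eqP <- Hs; by exists s. Qed.

Lemma par_count n nb F B (tau : 'I_n -> nat) (S : {set 'I_n}) (act : 'I_n -> bool) K :
  LineAx nb F B tau -> 0 < K ->
  (forall y, y \notin S -> 0 < sp S tau (tau y) ->
     act y = (K %| (tau y).+1 - sp S tau (tau y))) ->
  forall m, m < n -> 0 < sp S tau m -> parf S tau act m = odd ((m.+1 - sp S tau m) %/ K).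
Proof.
move=> Hl HK Hact; case: (Hl) => _ _ _ _ Hinj Hlt Hsur.
elim=> [|m IH] Hm /=.
  by case: ifP => // _ _; rewrite subnn div0n.
case Hh: (hereS S tau m.+1) => Hsp; first by rewrite subnn div0n.
have [y Hy] := Hsur m.+1 Hm.
have Hy' : y \notin S by rewrite -(hereS_tau' S y Hl) Hy Hh.
have Hg : gpos tau m.+1 = Some y by rewrite -Hy gposP.
rewrite Hg (Hact y Hy') Hy /= ?Hh; last by rewrite ?Hy /= ?Hh.
rewrite IH //; last by lia.
have := sp_le S tau m => Hle.
by rewrite subSn // odd_divS.
Qed.

Lemma sp_pos_spec n nb F B (tau : 'I_n -> nat) (S : {set 'I_n}) m q :
  LineAx nb F B tau -> sp S tau m = q.+1 ->
  [/\ q <= m, exists2 s, s \in S & tau s = q &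
      forall y, q < tau y <= m -> y \notin S].
Proof.
move=> Hl; elim: m => [|m IH] /=.
  case: ifP => // /hereS_ex [s Hs Hts] [<-]; split => //; first by exists s.
  move=> y; lia.
case: ifP => [/hereS_ex [s Hs Hts] [<-]|Hh /IH [H1 H2 H3]].
  split => //; first by exists s.
  move=> y; lia.
split => //; first by lia.
move=> y /andP [Hqy]; rewrite leq_eqVlt => /orP [/eqP Hy|Hy].
  by rewrite -(hereS_tau' S y Hl) Hy Hh.
by apply: H3; rewrite Hqy.
Qed.

Lemma sp_zero_spec n nb F B (tau : 'I_n -> nat) (S : {set 'I_n}) m :
  LineAx nb F B tau -> sp S tau m = 0 -> forall y, tau y <= m -> y \notin S.
Proof.
move=> Hl; elim: m => [|m IH] /=.
  case: ifP => // Hh _ y; rewrite leqn0 => /eqP Hy.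
  by rewrite -(hereS_tau' S y Hl) Hy Hh.
case: ifP => // Hh /IH H y; rewrite leq_eqVlt => /orP [/eqP Hy|Hy].
  by rewrite -(hereS_tau' S y Hl) Hy Hh.
by apply: H.
Qed.

Section Main.
Variables (n : nat) (o : node) (d : 'I_6) (S : {set 'I_n}).

Let tL := @tauL n d.
Let tR := fun x => n.-1 - tL x.
Let F := F0 d.

Lemma LL : LineAx (nbr o d) F (opp F) tL.
Proof. exact: lineL. Qed.

Lemma LR : LineAx (nbr o d) (opp F) F tR.
Proof. have H := @line_rev n (nbr o d) F (opp F) tL (lineL n o d). exact H. Qed.

Lemma FoppF : (F == opp F) = false.
Proof. by rewrite eq_sym; apply/negbTE/opp_neq. Qed.
Lemma oppFF : (opp F == F) = false.
Proof. by apply/negbTE/opp_neq. Qed.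

Lemma flip01 : flipl (ln 0) = ln 1. Proof. by apply/val_inj; rewrite /= /flipl /ln !inordK. Qed.
Lemma flip10 : flipl (ln 1) = ln 0. Proof. by apply/val_inj; rewrite /= /flipl /ln !inordK. Qed.
Lemma flip23 : flipl (ln 2) = ln 3. Proof. by apply/val_inj; rewrite /= /flipl /ln !inordK. Qed.
Lemma flip32 : flipl (ln 3) = ln 2. Proof. by apply/val_inj; rewrite /= /flipl /ln !inordK. Qed.
Lemma grp0 : grp (ln 0) = false. Proof. by rewrite /grp /ln inordK. Qed.
Lemma grp1 : grp (ln 1) = false. Proof. by rewrite /grp /ln inordK. Qed.
Lemma grp2 : grp (ln 2) = true. Proof. by rewrite /grp /ln inordK. Qed.
Lemma grp3 : grp (ln 3) = true. Proof. by rewrite /grp /ln inordK. Qed.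
Lemma ln01 : ln 0 != ln 1. Proof. by rewrite -val_eqE /ln /= !inordK. Qed.
Lemma ln23 : ln 2 != ln 3. Proof. by rewrite -val_eqE /ln /= !inordK. Qed.

Lemma lanesL (l : 'I_4) : grp l = false -> l = ln 0 \/ l = ln 1.
Proof.
case: l => [[|[|m]] Hm] H.
- by left; apply/val_inj; rewrite /= /ln inordK.
- by right; apply/val_inj; rewrite /= /ln inordK.
- by move: H; rewrite /grp.
Qed.

Lemma lanesR (l : 'I_4) : grp l = true -> l = ln 2 \/ l = ln 3.
Proof.
case: l => [[|[|[|[|m]]]] Hm] H; try by move: H; rewrite /grp.
- by left; apply/val_inj; rewrite /= /ln inordK.
- by right; apply/val_inj; rewrite /= /ln inordK.
Qed.

Section Conf.
Variable c0 : 'I_n -> Qt.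
Hypothesis HS : forall x, qS (c0 x) = (x \in S).
Hypothesis HF : forall x, qF (c0 x) = F.

Lemma recvL u b : u \notin S ->
  recv Alg o d c0 u (F, if b then ln 1 else ln 0) =
  (0 < sp S tL (tL u)) && (b == parf S tL (fun y => qaL (c0 y)) (tL u)).
Proof.
move=> Hu; apply: (recv_line LL grp0 grp1 ln01 lanesL HS) => //.
- move=> x Hx l Hl; rewrite /partf HS (negbTE Hx) HF FoppF eqxx /=.
  by move: Hl; rewrite /grp => ->.
- move=> x Hx b'; rewrite /partf HS (negbTE Hx) HF eqxx /=.
  by case: b'; case: (qaL (c0 x)); rewrite /= ?flip01 ?flip10 /ln inordK.
- move=> x l; rewrite /beepf HF => /andP [_ /orP [/eqP -> //|/eqP ->]].
  by rewrite /= grp2.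
- by move=> x Hx; rewrite /beepf HS Hx HF eqxx.
Qed.

Lemma recvR u b : u \notin S ->
  recv Alg o d c0 u (opp F, if b then ln 3 else ln 2) =
  (0 < sp S tR (tR u)) && (b == parf S tR (fun y => qaR (c0 y)) (tR u)).
Proof.
move=> Hu; apply: (recv_line LR grp2 grp3 ln23 lanesR HS) => //.
- move=> x Hx l Hl; rewrite /partf HS (negbTE Hx) HF eqxx oppFF /=.
  have Hl' : (l < 2) = false by rewrite ltnNge; move: Hl; rewrite /grp => ->.
  by rewrite Hl'.
- move=> x Hx b'; rewrite /partf HS (negbTE Hx) HF FoppF eqxx /=.
  by case: b'; case: (qaR (c0 x)); rewrite /= ?flip23 ?flip32 /ln inordK.
- move=> x l; rewrite /beepf HF => /andP [_ /orP [/eqP ->|/eqP -> //]].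
  by rewrite /= grp0.
- by move=> x Hx; rewrite /beepf HS Hx HF !eqxx orbT.
Qed.

End Conf.

Hypothesis HS0 : S != set0.

Let c j := run Alg o d S j.

Lemma runS j x : c j.+1 x = deltaf (c j x) (recv Alg o d (c j) x).
Proof. by []. Qed.
Lemma run0 x : c 0 x = initf (x \in S) (occupied o d x).
Proof. by []. Qed.

Lemma n2 x : x \notin S -> 1 < n.
Proof.
move=> Hx; case/set0Pn: HS0 => s Hs.
have : s != x by apply: contraNneq Hx => <-.
rewrite -val_eqE; move: (ltn_ord s) (ltn_ord x) => /= H1 H2 H3; lia.
Qed.

Lemma opp_mod3 (e : 'I_6) : (opp e) %% 3 = e %% 3.
Proof. case: e => [[|[|[|[|[|[|ee]]]]]] He] //; rewrite /opp /= ?inordK //. Qed.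

Lemma init_F : 1 < n -> forall x, qF (c 0 x) = F.
Proof.
move=> Hn x; rewrite run0 /initf /qF /=.
case: pickP => [e|H].
  rewrite /occupied ffunE; case E: (nbr o d x e) => [y|] // _.
  by move/nbr_someP: E => [[-> _]|[-> _]] //; rewrite /F /F0 opp_mod3.
exfalso; case: (ltnP x.+1 n) => Hx.
  have E : nbr o d x d = Some (Ordinal Hx) by apply/nbr_someP; left.
  by have := H d; rewrite /occupied ffunE E.
have Hx' : x.-1 < n by move: (ltn_ord x); lia.
have E : nbr o d x (opp d) = Some (Ordinal Hx').
  apply/nbr_someP; right; split => //=; move: (ltn_ord x); lia.
by have := H (opp d); rewrite /occupied ffunE E.
Qed.

Definition dL x := (tL x).+1 - sp S tL (tL x).
Definition dR x := (tR x).+1 - sp S tR (tR x).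

Definition Inv j : Prop :=
 [/\ forall x, qS (c j x) = (x \in S),
     forall x, qF (c j x) = qF (c 0 x),
     forall x, x \notin S -> 0 < sp S tL (tL x) -> qaL (c j x) = (2 ^ j %| dL x),
     forall x, x \notin S -> 0 < sp S tR (tR x) -> qaR (c j x) = (2 ^ j %| dR x) &
     forall x, x \notin S ->
       [/\ 0 < j -> qsL (c j x) = (0 < sp S tL (tL x)),
           0 < j -> qsR (c j x) = (0 < sp S tR (tR x)) &
           0 < sp S tL (tL x) -> 0 < sp S tR (tR x) ->
             qle (c j x) = (dL x %% 2 ^ j <= dR x %% 2 ^ j)]].

Lemma inv0 : Inv 0.
Proof.
split => //.
- by move=> x _ _; rewrite run0 /qaL /= dvd1n.
- by move=> x _ _; rewrite run0 /qaR /= dvd1n.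
- by move=> x _; split => //; move=> _ _; rewrite run0 /qle /= !modn1.
Qed.

Lemma le_upd K a b : 0 < K ->
  (if odd (a %/ K) == odd (b %/ K) then a %% K <= b %% K else odd (b %/ K)) =
  (odd (a %/ K) * K + a %% K <= odd (b %/ K) * K + b %% K).
Proof.
move=> HK; have := ltn_pmod a HK; have := ltn_pmod b HK.
case: (odd (a %/ K)); case: (odd (b %/ K)) => /= H1 H2; apply/idP/idP; lia.
Qed.

Lemma invS j : Inv j -> Inv j.+1.
Proof.
case=> I1 I2 I3 I4 I5.
have I1' : forall x, qS (c j.+1 x) = (x \in S).
  move=> x; rewrite runS /deltaf; case: (boolP (x \in S)) => Hx.
    by rewrite I1 Hx /= I1.
  by rewrite I1 (negbTE Hx) /qS /=; apply/esym/negbTE.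
have I2' : forall x, qF (c j.+1 x) = qF (c 0 x).
  move=> x; rewrite runS /deltaf; case: ifP => // _; by rewrite -I2.
suff H : forall x, x \notin S ->
  [/\ 0 < sp S tL (tL x) -> qaL (c j.+1 x) = (2 ^ j.+1 %| dL x),
      0 < sp S tR (tR x) -> qaR (c j.+1 x) = (2 ^ j.+1 %| dR x),
      qsL (c j.+1 x) = (0 < sp S tL (tL x)),
      qsR (c j.+1 x) = (0 < sp S tR (tR x)) &
      0 < sp S tL (tL x) -> 0 < sp S tR (tR x) ->
             qle (c j.+1 x) = (dL x %% 2 ^ j.+1 <= dR x %% 2 ^ j.+1)].
  split => // x Hx; have [] := H x Hx => //.
move=> x Hx.
have Hn := n2 Hx.
have HF' : forall y, qF (c j y) = F by move=> y; rewrite I2 init_F.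
have RL0 := recvL I1 HF' false Hx; have RL1 := recvL I1 HF' true Hx.
have RR2 := recvR I1 HF' false Hx; have RR3 := recvR I1 HF' true Hx.
rewrite /= in RL0 RL1 RR2 RR3.
have HK : 0 < 2 ^ j by rewrite expn_gt0.
have PL : 0 < sp S tL (tL x) ->
    parf S tL (fun y => qaL (c j y)) (tL x) = odd (dL x %/ 2 ^ j).
  move=> Hs; apply: (par_count LL HK) => //; exact: (la_lt LL x).
have PR : 0 < sp S tR (tR x) ->
    parf S tR (fun y => qaR (c j y)) (tR x) = odd (dR x %/ 2 ^ j).
  move=> Hs; apply: (par_count LR HK) => //; exact: (la_lt LR x).
have E : c j.+1 x = mkQ false F
   (qaL (c j x) && ~~ ((0 < sp S tL (tL x)) && parf S tL (fun y => qaL (c j y)) (tL x)))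
   (qaR (c j x) && ~~ ((0 < sp S tR (tR x)) && parf S tR (fun y => qaR (c j y)) (tR x)))
   ((0 < sp S tL (tL x)) && ~~ parf S tL (fun y => qaL (c j y)) (tL x)
     || (0 < sp S tL (tL x)) && parf S tL (fun y => qaL (c j y)) (tL x))
   ((0 < sp S tR (tR x)) && ~~ parf S tR (fun y => qaR (c j y)) (tR x)
     || (0 < sp S tR (tR x)) && parf S tR (fun y => qaR (c j y)) (tR x))
   (if (0 < sp S tL (tL x)) && parf S tL (fun y => qaL (c j y)) (tL x) ==
       (0 < sp S tR (tR x)) && parf S tR (fun y => qaR (c j y)) (tR x)
    then qle (c j x)
    else (0 < sp S tR (tR x)) && parf S tR (fun y => qaR (c j y)) (tR x)).
  rewrite runS /deltaf I1 (negbTE Hx) HF' /=.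
  rewrite RL0 RL1 RR2 RR3; by case: (parf _ _ _ _); case: (parf _ _ _ _).
rewrite E /qaL /qaR /qsL /qsR /qle /=; split.
- move=> Hs; rewrite Hs PL //= -act_upd; rewrite -/(qaL _) I3 //.
- move=> Hs; rewrite Hs PR //= -act_upd; rewrite -/(qaR _) I4 //.
- by case: (0 < _); case: (parf _ _ _ _).
- by case: (0 < _); case: (parf _ _ _ _).
- move=> Hs1 Hs2; rewrite Hs1 Hs2 PL // PR //= !mod_upd -le_upd //.
  have [_ _ Hle] := I5 x Hx; rewrite /qle in Hle; by rewrite Hle.
Qed.

Lemma inv_all j : Inv j.
Proof. elim: j => [|j IH]; [exact: inv0|exact: invS]. Qed.

End Main.

Section Main2.
Variables (n : nat) (o : node) (d : 'I_6) (S : {set 'I_n}).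
Local Notation tL := (@tauL n d).
Local Notation tR := (fun x : 'I_n => n.-1 - @tauL n d x).
Local Notation F := (F0 d).
Hypothesis HS0 : S != set0.
Local Notation c := (run Alg o d S).

Definition Dm x := \big[minn/n]_(s in S) dist (tL x) (tL s).

Lemma tL_lt x : tL x < n. Proof. exact: (la_lt (LL n o d) x). Qed.

Lemma Dm_le x s : s \in S -> Dm x <= dist (tL x) (tL s).
Proof. by move=> Hs; rewrite /Dm; apply: bigmin_le_seq => //; rewrite mem_index_enum. Qed.

Lemma Dm_ge x k : (forall s, s \in S -> k <= dist (tL x) (tL s)) -> k <= n -> k <= Dm x.
Proof.
move=> H Hk; rewrite /Dm; apply: (big_ind (fun v => k <= v)) => //.
by move=> a b Ha Hb; rewrite leq_min Ha.
Qed.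

Lemma Dm_len x : Dm x <= n.
Proof.
rewrite /Dm; apply: (big_ind (fun v => v <= n)) => //.
  by move=> a b Ha Hb; rewrite geq_min Ha.
move=> s _; have := tL_lt x; have := tL_lt s; rewrite /dist; lia.
Qed.

Lemma Dm_lip a b : dist (tL a) (tL b) = 1 -> Dm a <= (Dm b).+1.
Proof.
move=> Hab; rewrite {2}/Dm; apply: (big_ind (fun v => Dm a <= v.+1)).
- by have := Dm_len a; lia.
- by move=> v w Hv Hw; rewrite /minn; case: ifP.
move=> s Hs; have := Dm_le a Hs; move: Hab; rewrite /dist; lia.
Qed.

Lemma Dm_S x : x \in S -> Dm x = 0.
Proof. by move=> Hx; apply/eqP; rewrite -leqn0; have := Dm_le x Hx; rewrite /dist subnn. Qed.

Lemma Dm_step x y s k : s \in S -> dist (tL x) (tL s) = k.+1 ->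
  (forall s', s' \in S -> k.+1 <= dist (tL x) (tL s')) ->
  dist (tL x) (tL y) = 1 -> dist (tL y) (tL s) = k -> (Dm y).+1 = Dm x.
Proof.
move=> Hs Hd Hlow Hxy Hys.
have E1 : Dm x = k.+1.
  apply/eqP; rewrite eqn_leq -{1}Hd Dm_le // Dm_ge //.
  by rewrite -Hd; have := tL_lt x; have := tL_lt s; rewrite /dist; lia.
have := Dm_le y Hs; have := Dm_lip Hxy; rewrite Hys E1; lia.
Qed.

Lemma adjX_dist a b : adjX o d a b -> dist (tL a) (tL b) = 1.
Proof.
move/existsP => [e]; rewrite pos_eq => H.
have : (nat_of_ord b = (nat_of_ord a).+1) \/ ((nat_of_ord b).+1 = nat_of_ord a).
  by case/orP: H => /andP [_ /eqP ->]; [left|right].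
rewrite /tL /tauL /dist; move: (ltn_ord a) (ltn_ord b); case: ifP => _; lia.
Qed.

Lemma nbr_adjX (a b : 'I_n) e : nbr o d a e = Some b -> adjX o d a b.
Proof. by move=> H; apply/existsP; exists e; rewrite pos_eq -(nbr_some o) H. Qed.

Lemma final_step t x : (trunc_log 2 n).+1 <= t -> x \notin S ->
  exists y, [/\ parent_at Alg o d S t x = Some y, adjX o d x y & (Dm y).+1 = Dm x].
Proof.
move=> Ht Hx.
have [I1 I2 I3 I4 I5] := inv_all o d HS0 t.
have Hn := n2 HS0 Hx.
have HF : qF (c t x) = F by rewrite I2 (init_F o d HS0 Hn).
have [HsL HsR Hle] := I5 x Hx.
clear I2 I3 I4 I5.
have Ht0 : 0 < t by move: Ht; clear; lia.
have Hbig : n < 2 ^ t.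
  apply: (leq_trans (trunc_log_ltn n (erefl true : 1 < 2))); exact: leq_pexp2l.
have [LB LF LBB Lno Linj Llt Lsur] := (LL n o d).
have [RB RF RBB Rno Rinj Rlt Rsur] := (LR n o d).
have HtR : forall y, tR y = n.-1 - tL y by [].
set hL := 0 < sp S tL (tL x); set hR := 0 < sp S tR (tR x).
have HdL : (dL d S) x < 2 ^ t by rewrite /dL; have := tL_lt x; move: Hbig; clear; lia.
have HdR : (dR d S) x < 2 ^ t by rewrite /dR; have := la_lt (LR n o d) x; move: Hbig; clear; lia.
have Hcond : qsL (c t x) && (~~ qsR (c t x) || qle (c t x)) = hL && (~~ hR || ((dL d S) x <= (dR d S) x)).
  rewrite HsL // HsR // -/hL -/hR; case: (boolP hL) => EL //=; case: (boolP hR) => ER //=.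
  by rewrite Hle // !modn_small.
have Hpar : parent_at Alg o d S t x =
   obind (nbr o d x) (if hL && (~~ hR || ((dL d S) x <= (dR d S) x)) then Some (opp F)
                      else if hR then Some F else None).
  by rewrite /parent_at /= /outf I1 (negbTE Hx) -Hcond HsR // HF.
clear HsL HsR Hle HF I1 Hcond HdL HdR Hbig.
have specL : hL -> exists2 s, s \in S & [/\ tL s < tL x, (dL d S) x = tL x - tL s &
    forall y, tL s < tL y <= tL x -> y \notin S].
  rewrite /hL /dL; case Esp: (sp S tL (tL x)) => [|q] // _.
  have [Hq [s Hs Hts] Hno] := sp_pos_spec (LL n o d) Esp.
  exists s => //; rewrite Hts; split; [|lia|by []].
  rewrite ltn_neqAle Hq andbT; apply: contraNneq Hx => E.
  by rewrite -(Linj _ _ (etrans Hts E)).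
have specR : hR -> exists2 s, s \in S & [/\ tL x < tL s, (dR d S) x = tL s - tL x &
    forall y, tL x <= tL y < tL s -> y \notin S].
  rewrite /hR /dR; case Esp: (sp S tR (tR x)) => [|q] // _.
  have [Hq [s Hs Hts] Hno] := sp_pos_spec (LR n o d) Esp.
  have Hxs : s != x by apply: contraNneq Hx => <-.
  have Hv : tL s != tL x by apply: contra Hxs => /eqP /Linj ->.
  move: Hts Hq Hno; rewrite /= => Hts Hq Hno.
  have := tL_lt x; have := tL_lt s => Hs1 Hs2.
  exists s => //; split; first by move: Hv; lia.
    by lia.
  move=> y Hy; apply: Hno; rewrite /=; have := tL_lt y; lia.
have nspecL : ~~ hL -> forall y, tL y <= tL x -> y \notin S.
  rewrite /hL lt0n negbK => /eqP E; exact: (sp_zero_spec (LL n o d) E).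
have nspecR : ~~ hR -> forall y, tL x <= tL y -> y \notin S.
  rewrite /hR lt0n negbK => /eqP E y Hy; apply: (sp_zero_spec (LR n o d) E).
  rewrite /=; lia.
case E: (hL && (~~ hR || ((dL d S) x <= (dR d S) x))).
- move/andP: E => [EL ER].
  have [s Hs [Hsx Hd Hno]] := specL EL.
  have [y Hy] := Lsur (tL x).-1 ltac:(have := tL_lt x; lia).
  have Hn' : nbr o d x (opp F) = Some y by apply/LBB; lia.
  exists y; split.
  + by rewrite Hpar EL ER /= Hn'.
  + exact: nbr_adjX Hn'.
  apply: (Dm_step (k := ((dL d S) x).-1) Hs); rewrite /dist.
  + by move: Hd Hsx; clear; lia.
  + move=> s' Hs'; case: (leqP (tL s') (tL x)) => H.
      case: (leqP (tL s') (tL s)) => H2; first by move: Hd Hsx H H2; clear; lia.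
      by move: (Hno s'); rewrite H2 H Hs' => /(_ isT).
    case EhR: hR ER => /= ER.
      have [s2 Hs2 [Hxs2 Hd2 Hno2]] := specR EhR.
      case: (ltnP (tL s') (tL s2)) => H3.
        by move: (Hno2 s'); rewrite H3 (ltnW H) Hs' => /(_ isT).
      by move: Hd Hsx Hd2 Hxs2 H H3 ER; clear; lia.
    by move: (nspecR (negbT EhR) s' (ltnW H)); rewrite Hs'.
  + by move: Hy Hsx; clear; lia.
  + by move: Hy Hd Hsx; clear; lia.
- have EhR : hR.
    apply/negPn/negP => EhR; move: E; rewrite EhR /= andbT => EhL.
    case/set0Pn: HS0 => s Hs.
    case: (leqP (tL s) (tL x)) => H.
      by move: (nspecL (negbT EhL) s H); rewrite Hs.
    by move: (nspecR EhR s (ltnW H)); rewrite Hs.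
  have [s Hs [Hxs Hd Hno]] := specR EhR.
  have [y Hy] := Lsur (tL x).+1 ltac:(have := tL_lt s; lia).
  have Hn' : nbr o d x F = Some y by apply/LF.
  exists y; split.
  + by rewrite Hpar E EhR /= Hn'.
  + exact: nbr_adjX Hn'.
  apply: (Dm_step (k := ((dR d S) x).-1) Hs); rewrite /dist.
  + by move: Hd Hxs; clear; lia.
  + move=> s' Hs'; case: (ltnP (tL s') (tL x)) => H.
      case EhL: hL E => /= E.
        have [s1 Hs1 [Hs1x Hd1 Hno1]] := specL EhL.
        move: E; rewrite EhR /= => /negbT; rewrite -ltnNge => Hlt.
        case: (leqP (tL s') (tL s1)) => H2; first by move: Hd Hxs Hd1 Hs1x H H2 Hlt; clear; lia.
        by move: (Hno1 s'); rewrite H2 (ltnW H) Hs' => /(_ isT).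
      by move: (nspecL (negbT EhL) s' (ltnW H)); rewrite Hs'.
    case: (ltnP (tL s') (tL s)) => H3; last by move: Hd Hxs H H3; clear; lia.
    by move: (Hno s'); rewrite H3 H Hs' => /(_ isT).
  + by move: Hy Hxs; clear; lia.
  + by move: Hy Hd Hxs; clear; lia.
Qed.

End Main2.

Theorem mainTheorem10 :
  exists (Q : finType) (k : nat) (A : algorithm Q k) (C : nat),
    forall (n : nat) (o : node) (d : 'I_6) (S : {set 'I_n}),
      S != set0 ->
      exists T : nat, T <= C * (trunc_log 2 n).+1 /\
        forall t : nat, T <= t ->
          is_SPF (adjX o d) S (parent_at A o d S t).
Proof.
exists Qt, 4, Alg, 1 => n o d S HS0.
exists (trunc_log 2 n).+1; split; first by rewrite mul1n.
move=> t Ht.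
apply: (@SPF_of n (adjX o d) S _ (Dm d S)).
- move=> u Hu; have [I1 _ _ _ _] := inv_all o d HS0 t.
  by rewrite /parent_at /= /outf I1 Hu.
- exact: Dm_S.
- move=> u Hu; exact: (final_step o d HS0 Ht Hu).
- move=> a b Hab; apply: (Dm_lip o HS0); exact: (adjX_dist HS0 Hab).
Qed.
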